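(* Let $\mathbf C$ satisfy (C1)–(C4) as in the context. Then $\mathcal M_1^{\mathcal X,\mathcal T}(\mathbf C)$ is non-empty. Further, the market comprising the stock, the bond and the call options (trading at the prices $\mathbf C$) is arbitrage free.
   Context: Fix integers $N\ge1$, $J\ge1$, times $0=t_0<t_1<\dots<t_N=T$, $\mathcal T=\{t_1,\dots,t_N\}$, an initial discounted stock price $s_0>0$, strikes $0<x_1<\dots<x_J$, $x_0=0$, $\mathcal X=\{x_0,\dots,x_J\}$. Interest rates are zero after discounting. $\mathbf C=(c_{j,n})_{0\le j\le J,1\le n\le N}$, with $c_{0,n}=s_0$, is the matrix of prices of the calls paying $(X_{t_n}-x_j)^+$ at $t_n$, and satisfies: (C1) $s_0=c_{0,n}\ge c_{1,n}\ge\dots\ge c_{J,n}\ge0$; (C2) $1\ge\frac{c_{0,n}-c_{1,n}}{x_1}\ge\frac{c_{1,n}-c_{2,n}}{x_2-x_1}\ge\dots\ge\frac{c_{J-1,n}-c_{J,n}}{x_J-x_{J-1}}$; (C3) $c_{j,n+1}\ge c_{j,n}$ for $1\le n\le N-1$; (C4) $c_{J,N}=0$. Set $p_{0,n}=1-\frac{s_0-c_{1,n}}{x_1}$, $p_{j,n}=\frac{c_{j-1,n}-c_{j,n}}{x_j-x_{j-1}}-\frac{c_{j,n}-c_{j+1,n}}{x_{j+1}-x_j}$ ($1\le j<J$), $p_{J,n}=\frac{c_{J-1,n}-c_{J,n}}{x_J-x_{J-1}}$. $\mathcal M^{\mathcal X,\mathcal T}(\mathbf C)$ is the set of models: a filtered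 probability space $(\mathcal F_{t_n})_{0\le n\le N}$ with an adapted martingale $(X_{t_n})_{0\le n\le N}$, $X_{t_0}=s_0$, $X_{t_n}\in\mathcal X$ and $\mathbb P(X_{t_n}=x_j)=p_{j,n}$ for $n\ge1$ (equivalently $\mathbb E[(X_{t_n}-x_j)^+]=c_{j,n}$). $\mathcal M_1^{\mathcal X,\mathcal T}(\mathbf C)$ is the subset of those models in which $X$ is Markov: $\mathbb P(X_{t_{n+1}}=x_k\mid\mathcal F_{t_n})=\mathbb P(X_{t_{n+1}}=x_k\mid X_{t_n})$. *)

(* Defs.v *)
From mathcomp Require Import all_boot all_order all_algebra.
Set Implicit Arguments. Unset Strict Implicit. Unset Printing Implicit Defensive.
Import Order.TTheory GRing.Theory Num.Theory.
Local Open Scope ring_scope.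

Section Market.
Variables (R : realFieldType) (N J : nat) (s0 : R) (x : nat -> R) (c : nat -> nat -> R).
(* Conventions: strikes x_0..x_J as [x 0 .. x J]; call prices c_{j,n} as
   [c j n] for 0 <= j <= J, 1 <= n <= N (values outside are irrelevant). *)

Definition slope (j n : nat) : R := (c j.-1 n - c j n) / (x j - x j.-1).

Definition C1 : Prop := forall n, (1 <= n <= N)%N ->
  [/\ c 0%N n = s0, (forall j, (j < J)%N -> c j.+1 n <= c j n) & 0 <= c J n].
Definition C2 : Prop := forall n, (1 <= n <= N)%N ->
  (c 0%N n - c 1%N n) / x 1%N <= 1 /\
  (forall j, (1 <= j < J)%N -> slope j.+1 n <= slope j n).
Definition C3 : Prop := forall j n, (j <= J)%N -> (1 <= n < N)%N -> c j n <= c j n.+1.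
Definition C4 : Prop := c J N = 0.

Definition pj (j n : nat) : R :=
  if j == 0%N then 1 - (s0 - c 1%N n) / x 1%N
  else if (j < J)%N then slope j n - slope j.+1 n
  else slope J n.

(* Canonical path space: a path w gives X_{t_n} = x_(w (n-1)) for n = 1..N. *)
Definition path := {ffun 'I_N -> 'I_J.+1}.

Definition Xt (w : path) (m : nat) : R :=
  if m is m'.+1 then oapp (fun i : 'I_N => x (w i)) 0 (insub m' : option 'I_N)
  else s0.

(* w and w' agree at times t_1..t_m (same atom of the natural F_{t_m}). *)
Definition agree (m : nat) (w w' : path) : bool :=
  [forall i : 'I_N, (i < m)%N ==> (w i == w' i)].

Definition prob (P : {ffun path -> R}) (A : pred path) : R := \sum_(w | A w) P w.

(* P is the law on the canonical space (natural filtration) of a model in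
   M_1^{X,T}(C): probability, marginals p_{j,n}, martingale, Markov. *)
Definition markov_model (P : {ffun path -> R}) : Prop :=
  [/\ (forall w, 0 <= P w), \sum_w P w = 1,
      (forall n j, (1 <= n <= N)%N -> (j <= J)%N ->
          prob P [pred w | Xt w n == x j] = pj j n),
      (* E[X_{t_{n+1}} | F_{t_n}] = X_{t_n}, n = 0..N-1 *)
      (forall n w0, (n < N)%N ->
          \sum_(w | agree n w w0) P w * (Xt w n.+1 - Xt w n) = 0) &
      (* P(X_{t_{n+1}} = x_k | F_{t_n}) = P(X_{t_{n+1}} = x_k | X_{t_n}),
         written without division on each atom of F_{t_n} *)
      (forall n w0 k, (1 <= n < N)%N -> (k <= J)%N ->
          prob P [pred w | agree n w w0 && (Xt w n.+1 == x k)]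
            * prob P [pred w | Xt w n == Xt w0 n]
          = prob P [pred w | agree n w w0]
            * prob P [pred w | (Xt w n == Xt w0 n) && (Xt w n.+1 == x k)])].

(* Semi-static strategies: b units of bond, a j n calls (X_{t_n}-x_j)^+,
   dynamic stock holding delta n over [t_n, t_{n+1}], adapted. *)
Definition adapted (delta : nat -> path -> R) : Prop :=
  forall n w w', agree n w w' -> delta n w = delta n w'.

Definition cost (b : R) (a : nat -> nat -> R) : R :=
  b + \sum_(0 <= j < J.+1) \sum_(1 <= n < N.+1) a j n * c j n.

Definition payoff (b : R) (a : nat -> nat -> R) (delta : nat -> path -> R)
    (w : path) : R :=
  b + \sum_(0 <= j < J.+1) \sum_(1 <= n < N.+1) a j n * Num.max 0 (Xt w n - x j)
    + \sum_(0 <= n < N) delta n w * (Xt w n.+1 - Xt w n).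

Definition arbitrage : Prop :=
  exists b a delta, [/\ adapted delta, cost b a <= 0 & forall w, 0 < payoff b a delta w].

End Market.

(* Main.v *)
Require Import Defs.
From mathcomp Require Import all_boot all_order all_algebra.
From mathcomp Require Import ring lra zify.
Set Implicit Arguments. Unset Strict Implicit. Unset Printing Implicit Defensive.
Import Order.TTheory GRing.Theory Num.Theory.
Local Open Scope ring_scope.

Lemma pmax_id (R : realFieldType) (t : R) : 0 <= t -> Num.max 0 t = t.
Proof. by move=> h; rewrite maxEle h. Qed.
Lemma pmax_0 (R : realFieldType) (t : R) : t <= 0 -> Num.max 0 t = 0.
Proof. move=> h; rewrite maxEle; case: ifP => // h2; apply/eqP; rewrite eq_le h; lra. Qed.

Lemma aff (R : realFieldType) (u y v c : R) : u < v -> u <= y <= v -> (c <= u \/ v <= c) ->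
  (v - y)/(v-u) * Num.max 0 (u - c) + (y - u)/(v-u) * Num.max 0 (v - c) = Num.max 0 (y - c).
Proof.
move=> uv /andP[uy yv] [cu|vc].
  rewrite !pmax_id; try lra; try (field; lra).
rewrite !pmax_0; try lra; try ring.
Qed.

Lemma aff2 (R : realFieldType) (u y v t : R) : u < v -> u <= y <= v -> (t <= u \/ v <= t) ->
  (v - y)/(v-u) * Num.max 0 (t - u) + (y - u)/(v-u) * Num.max 0 (t - v) = Num.max 0 (t - y).
Proof.
move=> uv /andP[uy yv] [cu|vc].
  rewrite !pmax_0; try lra; try ring.
rewrite !pmax_id; try lra; try (field; lra).
Qed.

Lemma cvx (R : realFieldType) (u y v t : R) : u < v -> u <= y <= v ->
  Num.max 0 (t - y) <= (v - y)/(v-u) * Num.max 0 (t - u) + (y - u)/(v-u) * Num.max 0 (t - v).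
Proof.
move=> uv /andP[uy yv].
have h1 : 0 <= (v - y)/(v-u) by apply: divr_ge0; lra.
have h2 : 0 <= (y - u)/(v-u) by apply: divr_ge0; lra.
have m1 : 0 <= Num.max 0 (t - u) by rewrite le_max lexx.
have m2 : 0 <= Num.max 0 (t - v) by rewrite le_max lexx.
have e1 : t - u <= Num.max 0 (t - u) by rewrite le_max lexx orbT.
have e2 : t - v <= Num.max 0 (t - v) by rewrite le_max lexx orbT.
rewrite ge_max; apply/andP; split.
  by apply: addr_ge0; apply: mulr_ge0.
apply: (le_trans (y := (v - y)/(v-u) * (t - u) + (y - u)/(v-u) * (t - v))).
  have -> : (v - y) / (v - u) * (t - u) + (y - u) / (v - u) * (t - v) = t - y by field; lra.
  by [].

apply: lerD; apply: ler_wpM2l => //.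
Qed.

Section Coupling.
Variables (R : realFieldType) (J : nat) (x : nat -> R).
Hypothesis xinc : forall j, (j < J)%N -> x j < x j.+1.

Lemma xlt i j : (i < j)%N -> (j <= J)%N -> x i < x j.
Proof.
elim: j => // j IH; rewrite ltnS leq_eqVlt => /orP[/eqP->|lij] hj; [exact: xinc|].
exact: lt_trans (IH lij (ltnW hj)) (xinc hj).
Qed.

Lemma xle i j : (i <= j)%N -> (j <= J)%N -> x i <= x j.
Proof. by rewrite leq_eqVlt => /orP[/eqP->|lij] hj; [rewrite lexx| apply/ltW/xlt]. Qed.

Lemma ordJ (i : 'I_J.+1) : (i <= J)%N.
Proof. by rewrite -ltnS ltn_ord. Qed.

Definition f (k m : nat) : R := Num.max 0 (x m - x k).
Definition dlt (a k : nat) : R := (a == k)%:R.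
Definition Kh (K : nat -> nat -> R) (h : nat -> R) (i : nat) : R :=
  \sum_(k < J.+1) K i k * h k.
Definition app (p : nat -> R) (K : nat -> nat -> R) (k : nat) : R :=
  \sum_(i < J.+1) p i * K i k.
Definition comp (K L : nat -> nat -> R) i k := \sum_(m < J.+1) K i m * L m k.
Definition kernel (K : nat -> nat -> R) : Prop := forall i, (i <= J)%N ->
  [/\ forall k, (k <= J)%N -> 0 <= K i k, Kh K (fun _ => 1) i = 1 & Kh K x i = x i].
Definition Cl (p : nat -> R) (k : nat) : R := \sum_(i < J.+1) p i * f k i.
Definition mass (p : nat -> R) := \sum_(i < J.+1) p i.
Definition mean (p : nat -> R) := \sum_(i < J.+1) p i * x i.
Definition tail (p : nat -> R) k := \sum_(k <= i < J.+1) p i.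

Lemma app_sum p K (h : nat -> R) :
  \sum_(k < J.+1) app p K k * h k = \sum_(i < J.+1) p i * Kh K h i.
Proof.
rewrite /app /Kh; under eq_bigr do rewrite big_distrl /=.
rewrite exchange_big; apply: eq_bigr => i _; rewrite big_distrr /=.
by apply: eq_bigr => k _; rewrite mulrA.
Qed.

Lemma sum_dlt a (h : nat -> R) : (a <= J)%N -> \sum_(k < J.+1) dlt a k * h k = h a.
Proof.
move=> ha; under eq_bigr do rewrite /dlt mulr_natl mulrb eq_sym.
by rewrite -big_mkcond big_ord1_eq ltnS ha.
Qed.

Lemma sum_dlt2 a (h : nat -> R) : (a <= J)%N -> \sum_(k < J.+1) h k * dlt k a = h a.
Proof.
move=> ha; rewrite -(sum_dlt h ha); apply: eq_bigr => k _.
by rewrite /dlt eq_sym mulrC.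
Qed.

Lemma Kh_dlt (h : nat -> R) i : (i <= J)%N -> Kh dlt h i = h i.
Proof. exact: sum_dlt. Qed.

Lemma app_dlt p k : (k <= J)%N -> app p dlt k = p k.
Proof. exact: sum_dlt2. Qed.

Lemma kernel_dlt : kernel dlt.
Proof. by move=> i hi; split; rewrite ?Kh_dlt // => k _; rewrite /dlt ler0n. Qed.

Lemma Kh_comp K L (h : nat -> R) i : Kh (comp K L) h i = Kh K (Kh L h) i.
Proof.
rewrite /Kh /comp; under eq_bigr do rewrite big_distrl /=.
rewrite exchange_big; apply: eq_bigr => m _; rewrite big_distrr /=.
by apply: eq_bigr => k _; rewrite mulrA.
Qed.

Lemma kernel_comp K L : kernel K -> kernel L -> kernel (comp K L).
Proof.
move=> hK hL i hi; have [K0 K1 K2] := hK i hi; split.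
- move=> k hk; apply: sumr_ge0 => m _; apply: mulr_ge0.
    by apply: K0; exact: ordJ.
  by have [L0 _ _] := hL m (ordJ m); apply: L0.
- rewrite Kh_comp -[in RHS]K1; apply: eq_bigr => m _.
  by have [_ L1 _] := hL m (ordJ m); rewrite /= L1.
- rewrite Kh_comp -[in RHS]K2; apply: eq_bigr => m _.
  by have [_ _ L2] := hL m (ordJ m); rewrite L2.
Qed.

Lemma app_comp p K L k : app (app p K) L k = app p (comp K L) k.
Proof. exact: (app_sum p K (fun m => L m k)). Qed.

Lemma app_ge0 p K : kernel K -> (forall i, (i <= J)%N -> 0 <= p i) ->
  forall k, (k <= J)%N -> 0 <= app p K k.
Proof.
move=> hK hp k hk; apply: sumr_ge0 => i _; apply: mulr_ge0; [exact: hp (ordJ i)|].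
by have [K0 _ _] := hK i (ordJ i); apply: K0.
Qed.

Lemma mass_app p K : kernel K -> mass (app p K) = mass p.
Proof.
move=> hK; rewrite /mass.
transitivity (\sum_(k < J.+1) app p K k * 1); first by apply: eq_bigr => k _; rewrite mulr1.
rewrite (app_sum p K (fun _ => 1)).
by apply: eq_bigr => i _; have [_ -> _] := hK i (ordJ i); rewrite mulr1.
Qed.

Lemma mean_app p K : kernel K -> mean (app p K) = mean p.
Proof.
move=> hK; rewrite /mean app_sum.
by apply: eq_bigr => i _; have [_ _ ->] := hK i (ordJ i).
Qed.

Lemma Cl_app p K k : Cl (app p K) k = \sum_(i < J.+1) p i * Kh K (f k) i.
Proof. exact: app_sum. Qed.

Lemma Cl_J p : Cl p J = 0.
Proof.
apply: big1 => i _; rewrite /f pmax_0 ?mulr0 // subr_le0; exact: xle (ordJ i) _.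
Qed.

Lemma Cl_0 p : Cl p 0 = mean p - x 0 * mass p.
Proof.
rewrite /Cl /mean /mass mulr_sumr -sumrB; apply: eq_bigr => i _.
rewrite /f pmax_id; [ring|].
by rewrite subr_ge0; apply: xle (ordJ i).
Qed.

Lemma tail_ord p k : tail p k = \sum_(i < J.+1 | (k <= i)%N) p i.
Proof. by rewrite /tail big_geq_mkord. Qed.

Lemma Cl_diff p k : (0 < k <= J)%N ->
  Cl p k.-1 - Cl p k = (x k - x k.-1) * tail p k.
Proof.
case/andP=> k0 kJ; rewrite /Cl tail_ord -sumrB mulr_sumr [RHS]big_mkcond /=.
apply: eq_bigr => i _; case: leqP => ki.
- rewrite /f !pmax_id; [ring| |].
  + by rewrite subr_ge0; apply: xle (ordJ i).
  + rewrite subr_ge0; apply: xle (ordJ i); exact: leq_trans (leq_pred k) ki.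
- rewrite /f !pmax_0 ?mulr0 ?subrr //.
  + by rewrite subr_le0; apply: xle (ltnW ki) kJ.
  + rewrite subr_le0; apply: xle; [by rewrite -ltnS prednK | exact: leq_trans (leq_pred k) kJ].
Qed.

Lemma tail_S p k : (k <= J)%N -> tail p k = p k + tail p k.+1.
Proof. by move=> hk; rewrite /tail big_ltn // ltnS. Qed.

Lemma tail_end p : tail p J.+1 = 0.
Proof. by rewrite /tail big_geq. Qed.

Lemma tail_0 p : tail p 0 = mass p.
Proof. by rewrite /tail big_mkord. Qed.

Lemma Cl_inj p q : mass p = mass q -> (forall k, (k <= J)%N -> Cl p k = Cl q k) ->
  forall k, (k <= J)%N -> p k = q k.
Proof.
move=> hm hC.
have ht : forall k, (k <= J.+1)%N -> tail p k = tail q k.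
  case=> [|k] hk; first by rewrite !tail_0.
  rewrite leq_eqVlt in hk; case/orP: hk => [/eqP[->]|hk]; first by rewrite !tail_end.
  have hk' : (0 < k.+1 <= J)%N by [].
  have hk2 : (k.+1 <= J)%N by [].
  have := Cl_diff p hk'; rewrite (hC k (ltnW hk2)) (hC _ hk2) (Cl_diff q hk').
  have hx : x k.+1 - x k.+1.-1 != 0 by rewrite subr_eq0 gt_eqF // xinc.
  by move/(mulfI hx).
move=> k hk; have := tail_S p hk; rewrite ht ?(leq_trans hk) // tail_S //.
by rewrite ht //; move/addIr.
Qed.


Section Step.
Variables (p q : nat -> R).
Hypothesis hp : forall i, (i <= J)%N -> 0 <= p i.
Hypothesis hq : forall i, (i <= J)%N -> 0 <= q i.
Hypothesis hm : mass p = mass q.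
Hypothesis hmu : mean p = mean q.
Hypothesis hle : forall k, (k <= J)%N -> Cl p k <= Cl q k.

Definition Zb (k : nat) : bool := Cl p k == Cl q k.

Lemma Z0 : Zb 0. Proof. by rewrite /Zb !Cl_0 hm hmu. Qed.
Lemma ZJ : Zb J. Proof. by rewrite /Zb !Cl_J. Qed.

Definition aa (i : nat) : nat :=
  arg_max (ord0 : 'I_J.+1) (fun k : 'I_J.+1 => ((k : nat) < i)%N && Zb k) (fun k => k : nat).
Definition bb (i : nat) : nat :=
  arg_min (ord_max : 'I_J.+1) (fun k : 'I_J.+1 => (i < k)%N && Zb k) (fun k => k : nat).

Lemma aa_le i : (aa i <= J)%N. Proof. exact: ordJ. Qed.
Lemma bb_le i : (bb i <= J)%N. Proof. exact: ordJ. Qed.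

Lemma aaP i : (i <= J)%N -> ~~ Zb i ->
  [/\ (aa i < i)%N, Zb (aa i) & forall k, (k <= J)%N -> (k < i)%N -> Zb k -> (k <= aa i)%N].
Proof.
move=> hi hz.
have i0 : (0 < i)%N by case: i hi hz => // _; rewrite Z0.
rewrite /aa; case: arg_maxnP => [|j /andP[ji zj] hmax]; first by rewrite /= i0 Z0.
split=> // k hk ki zk; have := hmax (inord k); rewrite /= inordK ?ltnS //.
by apply; rewrite ki zk.
Qed.

Lemma bbP i : (i <= J)%N -> ~~ Zb i ->
  [/\ (i < bb i)%N, Zb (bb i) & forall k, (k <= J)%N -> (i < k)%N -> Zb k -> (bb i <= k)%N].
Proof.
move=> hi hz.
have iJ : (i < J)%N.
  by rewrite ltn_neqAle hi andbT; apply/eqP => e; move: hz; rewrite e ZJ.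
rewrite /bb; case: arg_minnP => [|j /andP[ij zj] hmin]; first by rewrite /= iJ ZJ.
split=> // k hk ik zk; have := hmin (inord k); rewrite /= inordK ?ltnS //.
by apply; rewrite ik zk.
Qed.

Lemma gap i m : (i <= J)%N -> ~~ Zb i -> (m <= J)%N -> Zb m ->
  (m <= aa i)%N \/ (bb i <= m)%N.
Proof.
move=> hi hz hm' zm; have [_ _ ha] := aaP hi hz; have [_ _ hb] := bbP hi hz.
case: (ltngtP m i) => hmi.
- by left; apply: ha.
- by right; apply: hb.
- by move: hz; rewrite -hmi zm.
Qed.

Lemma xab i : (i <= J)%N -> ~~ Zb i -> x (aa i) < x i /\ x i < x (bb i).
Proof.
move=> hi hz; have [h1 _ _] := aaP hi hz; have [h2 _ _] := bbP hi hz.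
by split; apply: xlt => //; apply: bb_le.
Qed.

Definition wA i := (x (bb i) - x i) / (x (bb i) - x (aa i)).
Definition wB i := (x i - x (aa i)) / (x (bb i) - x (aa i)).
Definition Sk i k := if Zb i then dlt i k else wA i * dlt (aa i) k + wB i * dlt (bb i) k.

Lemma KhS (h : nat -> R) i : (i <= J)%N ->
  Kh Sk h i = if Zb i then h i else wA i * h (aa i) + wB i * h (bb i).
Proof.
move=> hi; rewrite /Kh /Sk; case: (Zb i); first exact: sum_dlt hi.
under eq_bigr do rewrite mulrDl -!mulrA.
have ha := aa_le i; have hb := bb_le i.
rewrite big_split /= -!mulr_sumr !sum_dlt // /wA /wB; ring.
Qed.

Lemma S_kernel : kernel Sk.
Proof.
move=> i hi; case: (boolP (Zb i)) => zi.
  have [K0 K1 K2] := kernel_dlt hi; split; rewrite ?KhS ?zi //.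
  by move=> k hk; rewrite /Sk zi; apply: K0.
have [h1 h2] := xab hi zi.
have wa : 0 <= wA i by apply: divr_ge0; lra.
have wb : 0 <= wB i by apply: divr_ge0; lra.
split; rewrite ?KhS ?(negbTE zi) //.
- move=> k hk; rewrite /Sk (negbTE zi); apply: addr_ge0; apply: mulr_ge0 => //; by rewrite /dlt ler0n.
- rewrite /wA /wB; field; lra.
- rewrite /wA /wB; field; lra.
Qed.

Definition ClS k := \sum_(i < J.+1) p i * Kh Sk (f k) i.

Lemma ClS_Z z : (z <= J)%N -> Zb z -> ClS z = Cl p z.
Proof.
move=> hz zz; apply: eq_bigr => i _; congr (_ * _); rewrite KhS ?ordJ //.
case: ifP => // /negbT zi; have [h1 h2] := xab (ordJ i) zi.
rewrite /f /wA /wB; apply: aff; first lra.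
  by rewrite !ltW.
case: (gap (ordJ i) zi hz zz) => hg; [left; exact: xle hg (aa_le i) | right; exact: xle hg hz].
Qed.

Lemma f_aff k m : (k <= J)%N -> ~~ Zb k -> (m <= J)%N -> Zb m ->
  f k m = wA k * f (aa k) m + wB k * f (bb k) m.
Proof.
move=> hk zk hm' zm; have [h1 h2] := xab hk zk.
rewrite /f /wA /wB aff2 //; first lra.
  by rewrite !ltW.
case: (gap hk zk hm' zm) => hg; [left; exact: xle hg (aa_le k) | right; exact: xle hg hm'].
Qed.

Lemma ClS_lin k : (k <= J)%N -> ~~ Zb k -> ClS k = wA k * ClS (aa k) + wB k * ClS (bb k).
Proof.
move=> hk zk; rewrite /ClS !mulr_sumr -big_split /=; apply: eq_bigr => i _.
rewrite !KhS ?ordJ //; case: ifP => zi.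
  by rewrite (f_aff hk zk (ordJ i) zi); ring.
have zi' : ~~ Zb i by rewrite zi.
have [_ za _] := aaP (ordJ i) zi'; have [_ zb _] := bbP (ordJ i) zi'.
by rewrite (f_aff hk zk (aa_le i) za) (f_aff hk zk (bb_le i) zb); ring.
Qed.

Lemma Cl_cvx k : (k <= J)%N -> ~~ Zb k -> Cl q k <= wA k * Cl q (aa k) + wB k * Cl q (bb k).
Proof.
move=> hk zk; have [h1 h2] := xab hk zk.
rewrite /Cl !mulr_sumr -big_split /=; apply: ler_sum => i _; rewrite /f.
rewrite mulrCA [X in _ <= _ + X]mulrCA -mulrDr; apply: ler_wpM2l; first exact: hq (ordJ i).
rewrite /wA /wB; apply: cvx; first lra.
by rewrite !ltW.
Qed.

Lemma ClS_ge k : (k <= J)%N -> ~~ Zb k -> Cl q k <= ClS k.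
Proof.
move=> hk zk; have [_ za _] := aaP hk zk; have [_ zb _] := bbP hk zk.
rewrite ClS_lin // !ClS_Z ?aa_le ?bb_le //.
by move/eqP: za => ->; move/eqP: zb => ->; apply: Cl_cvx.
Qed.

Definition D k := Cl q k - Cl p k.
Definition E k := ClS k - Cl p k.

Lemma DE k : (k <= J)%N -> ~~ Zb k -> 0 < D k /\ D k <= E k.
Proof.
move=> hk zk; have h1 := hle hk; have h2 := ClS_ge hk zk.
have h3 : Cl p k != Cl q k by [].
rewrite /D /E; split; last lra.
by rewrite subr_gt0 lt_def eq_sym h3 h1.
Qed.

Variable k0 : 'I_J.+1.
Hypothesis hk0 : ~~ Zb k0.

Definition ks : 'I_J.+1 := Order.arg_min k0 (fun k : 'I_J.+1 => ~~ Zb k) (fun k => D k / E k).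
Definition lam := D ks / E ks.

Lemma ksP : ~~ Zb ks /\ forall k : 'I_J.+1, ~~ Zb k -> lam <= D k / E k.
Proof. by rewrite /lam /ks; case: arg_minP. Qed.

Lemma lam_bounds : 0 < lam /\ lam <= 1.
Proof.
have [zk _] := ksP; have [d0 de] := DE (ordJ ks) zk.
have e0 : 0 < E ks by apply: lt_le_trans de.
rewrite /lam; split; first exact: divr_gt0.
by rewrite ler_pdivrMr // mul1r.
Qed.

Definition Kl i k := (1 - lam) * dlt i k + lam * Sk i k.

Lemma KhKl (h : nat -> R) i : (i <= J)%N -> Kh Kl h i = (1 - lam) * h i + lam * Kh Sk h i.
Proof.
move=> hi; rewrite /Kh; under eq_bigr do rewrite mulrDl -!mulrA.
rewrite big_split /= -!mulr_sumr sum_dlt // /lam; ring.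
Qed.

Lemma Kl_kernel : kernel Kl.
Proof.
move=> i hi; have [l0 l1] := lam_bounds; have [S0 S1 S2] := S_kernel hi.
split; rewrite ?KhKl // ?S1 ?S2; try ring.
move=> k hk; apply: addr_ge0; apply: mulr_ge0.
- by rewrite subr_ge0.
- by rewrite /dlt ler0n.
- exact: ltW.
- exact: S0.
Qed.

Lemma Cl_new k : Cl (app p Kl) k = (1 - lam) * Cl p k + lam * ClS k.
Proof.
rewrite Cl_app /Cl /ClS !mulr_sumr -big_split /=; apply: eq_bigr => i _.
rewrite KhKl ?ordJ //; ring.
Qed.

Lemma new_Z k : (k <= J)%N -> Zb k -> Cl (app p Kl) k = Cl q k.
Proof.
move=> hk zk; rewrite Cl_new ClS_Z //; move/eqP: zk => <-; ring.
Qed.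

Lemma new_le k : (k <= J)%N -> Cl (app p Kl) k <= Cl q k.
Proof.
move=> hk; case: (boolP (Zb k)) => zk; first by rewrite new_Z.
have [d0 de] := DE hk zk; have e0 : 0 < E k by apply: lt_le_trans de.
have [_ hmin] := ksP; have := hmin (inord k); rewrite inordK ?ltnS // => /(_ zk).
rewrite ler_pdivlMr // => h; rewrite Cl_new.
have -> : (1 - lam) * Cl p k + lam * ClS k = Cl p k + lam * E k by rewrite /E; ring.
move: h; rewrite /D; lra.
Qed.

Lemma new_eq_ks : Cl (app p Kl) ks = Cl q ks.
Proof.
have [zk _] := ksP; have [d0 de] := DE (ordJ ks) zk.
have e0 : E ks != 0 by rewrite gt_eqF //; apply: lt_le_trans de.
rewrite Cl_new.
have -> : (1 - lam) * Cl p ks + lam * ClS ks = Cl p ks + lam * E ks by rewrite /E; ring.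
by rewrite /lam divfK // /D; ring.
Qed.

Lemma card_lt : (#|[pred k : 'I_J.+1 | Cl (app p Kl) k != Cl q k]| <
  #|[pred k : 'I_J.+1 | Cl p k != Cl q k]|)%N.
Proof.
apply: proper_card; apply/properP; split.
  apply/subsetP => k; rewrite !inE; apply: contra => zk; apply/eqP; exact: new_Z (ordJ k) zk.
exists ks; rewrite !inE ?new_eq_ks ?eqxx //; by case: ksP.
Qed.

Lemma step_exists : exists K, [/\ kernel K,
  (#|[pred k : 'I_J.+1 | Cl (app p K) k != Cl q k]| < #|[pred k : 'I_J.+1 | Cl p k != Cl q k]|)%N
  & forall k, (k <= J)%N -> Cl (app p K) k <= Cl q k].
Proof. exists Kl; split; [exact: Kl_kernel | exact: card_lt | exact: new_le]. Qed.

End Step.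

Lemma coupling_ind n : forall p q,
  (#|[pred k : 'I_J.+1 | Cl p k != Cl q k]| <= n)%N ->
  (forall i, (i <= J)%N -> 0 <= p i) -> (forall i, (i <= J)%N -> 0 <= q i) ->
  mass p = mass q -> mean p = mean q -> (forall k, (k <= J)%N -> Cl p k <= Cl q k) ->
  exists K, kernel K /\ forall k, (k <= J)%N -> app p K k = q k.
Proof.
elim: n => [|n IH] p q hcard hp hq hm hmu hle.
  exists dlt; split; first exact: kernel_dlt.
  move=> k hk; rewrite app_dlt //; apply: Cl_inj => // j hj.
  move: hcard; rewrite leqn0 => /eqP/card0_eq/(_ (inord j)).
  by rewrite !inE inordK ?ltnS // => /negbFE/eqP.
case: (pickP [pred k : 'I_J.+1 | Cl p k != Cl q k]) => [k0 hk0|h0].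
  have [K1 [hK1 hc hl]] := step_exists hq hm hmu hle hk0.
  have hc' := leq_trans hc hcard; rewrite ltnS in hc'.
  have [K2 [hK2 hq2]] := IH (app p K1) q hc' (app_ge0 hK1 hp) hq
     (etrans (mass_app p hK1) hm) (etrans (mean_app p hK1) hmu) hl.
  exists (comp K1 K2); split; first exact: kernel_comp.
  by move=> k hk; rewrite -app_comp hq2.
exists dlt; split; first exact: kernel_dlt.
move=> k hk; rewrite app_dlt //; apply: Cl_inj => // j hj.
by have := h0 (inord j); rewrite /= inordK ?ltnS // => /negbFE/eqP.
Qed.

Lemma coupling p q :
  (forall i, (i <= J)%N -> 0 <= p i) -> (forall i, (i <= J)%N -> 0 <= q i) ->
  mass p = mass q -> mean p = mean q -> (forall k, (k <= J)%N -> Cl p k <= Cl q k) ->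
  exists K, kernel K /\ forall k, (k <= J)%N -> app p K k = q k.
Proof. exact: (coupling_ind (leqnn _)). Qed.

End Coupling.

Section Paths.
Variables (R : realFieldType) (J : nat).
Local Notation T := 'I_J.+1.

Definition wn m (w : {ffun 'I_m -> T}) (i : nat) : nat :=
  if (insub i : option 'I_m) is Some j then val (w j) else 0%N.

Lemma wn_ord m (w : {ffun 'I_m -> T}) (j : 'I_m) : wn w j = w j.
Proof. by rewrite /wn (insubT (fun i => i < m)%N (ltn_ord j)) /=; congr (val (w _)); apply: val_inj. Qed.

Lemma wn_out m (w : {ffun 'I_m -> T}) i : (m <= i)%N -> wn w i = 0%N.
Proof. by move=> h; rewrite /wn insubF // ltnNge h. Qed.

Lemma wn_le m (w : {ffun 'I_m -> T}) i : (wn w i <= J)%N.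
Proof. by rewrite /wn; case: insub => // j; rewrite -ltnS ltn_ord. Qed.

Lemma ffun_wn m (w : {ffun 'I_m -> T}) : [ffun j : 'I_m => inord (wn w j) : T] = w.
Proof. by apply/ffunP => j; rewrite ffunE wn_ord inord_val. Qed.

Definition ext m (v : {ffun 'I_m -> T}) (k : T) : {ffun 'I_m.+1 -> T} :=
  [ffun i : 'I_m.+1 => if ((i : nat) < m)%N then inord (wn v i) else k].

Lemma wn_ext m (v : {ffun 'I_m -> T}) k i :
  wn (ext v k) i = if (i < m)%N then wn v i else if i == m then val k else 0%N.
Proof.
case: (ltnP i m.+1) => h.
  rewrite (wn_ord (ext v k) (Ordinal h)) /ext ffunE /=.
  case: ifP => him; first by rewrite inordK // ltnS wn_le.
  have -> : i = m by apply/eqP; rewrite eqn_leq -ltnS h leqNgt him.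
  by rewrite eqxx.
rewrite wn_out // ifF; last by rewrite ltnNge ltnW.
by rewrite ifF //; apply/negbTE; rewrite neq_ltn h orbT.
Qed.

Lemma ext_val m (v : {ffun 'I_m -> T}) k (i : 'I_m.+1) :
  ext v k i = if ((i : nat) < m)%N then inord (wn v i) else k.
Proof. by rewrite /ext ffunE. Qed.

Lemma sum_ext m (F : {ffun 'I_m.+1 -> T} -> R) :
  \sum_(w : {ffun 'I_m.+1 -> T}) F w = \sum_(v : {ffun 'I_m -> T}) \sum_(k : T) F (ext v k).
Proof.
rewrite pair_big /=.
pose g (w : {ffun 'I_m.+1 -> T}) := ([ffun j : 'I_m => w (widen_ord (leqnSn m) j)], w ord_max).
rewrite (reindex (fun pk : {ffun 'I_m -> T} * T => ext pk.1 pk.2)) //.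
apply: onW_bij; apply: (@Bijective _ _ _ g).
- case=> v k; rewrite /g /=; congr pair.
    apply/ffunP => j; rewrite ffunE ext_val /=.
    have hj := ltn_ord j; rewrite hj wn_ord inord_val //.
  by rewrite ext_val /= ltnn.
- move=> w; apply/ffunP => i; rewrite ext_val; case: ifP => hi.
    apply: val_inj; rewrite /= (wn_ord _ (Ordinal hi)) ffunE /= inordK ?ltn_ord //.
    by congr (val (w _)); apply: val_inj.
  congr (w _); apply: val_inj => /=; apply/eqP.
  by rewrite eqn_leq (leqNgt m i) hi /= -ltnS; have := ltn_ord i.
Qed.

Lemma sum_ffun0 (F : {ffun 'I_0 -> T} -> R) :
  \sum_(v : {ffun 'I_0 -> T}) F v = F [ffun i => ord0].
Proof.
rewrite (eq_bigr (fun _ => F [ffun i => ord0])).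
  by rewrite sumr_const card_ffun !card_ord expn0.

by move=> v _; congr F; apply/ffunP => -[].
Qed.

Variables (N : nat) (x : nat -> R) (mu : nat -> nat -> R) (K : nat -> nat -> nat -> R).
Hypothesis mu1_ge0 : forall k, (k <= J)%N -> 0 <= mu 1%N k.
Hypothesis mu1_sum : \sum_(k < J.+1) mu 1%N k = 1.
Hypothesis Kker : forall n, (1 <= n < N)%N -> kernel J x (K n).
Hypothesis happ : forall n k, (1 <= n < N)%N -> (k <= J)%N -> app J (mu n) (K n) k = mu n.+1 k.

Definition step (i : nat) (f : nat -> nat) : R :=
  if i is i'.+1 then K i (f i') (f i) else mu 1%N (f 0%N).
Definition Pm m (w : {ffun 'I_m -> T}) : R := \prod_(i < m) step i (wn w).

Lemma step_local i f g : (forall j, (j <= i)%N -> f j = g j) -> step i f = step i g.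
Proof. by case: i => [|i] h /=; rewrite ?h // ?leqnSn. Qed.

Lemma Pm_ext m (v : {ffun 'I_m -> T}) (k : T) : Pm (ext v k) = Pm v * step m (wn (ext v k)).
Proof.
rewrite /Pm big_ord_recr /=; congr (_ * _); apply: eq_bigr => i _.
apply: step_local => j hj; rewrite wn_ext /= ifT //; exact: leq_ltn_trans hj (ltn_ord i).
Qed.

Lemma step_sum m (v : {ffun 'I_m -> T}) (h : nat -> R) :
  \sum_(k : T) step m (wn (ext v k)) * h k =
  if m is m'.+1 then Kh J (K m) h (wn v m') else \sum_(k < J.+1) mu 1%N k * h k.
Proof.
case: m v => [|m] v /=; apply: eq_bigr => k _; rewrite !wn_ext ?ltnn ?eqxx //.
by rewrite ltnSn.
Qed.

Definition cyl m (G : (nat -> nat) -> R) :=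
  forall f g, (forall i, (i < m)%N -> f i = g i) -> G f = G g.

Lemma step_one m (v : {ffun 'I_m -> T}) : (m < N)%N -> \sum_(k : T) step m (wn (ext v k)) = 1.
Proof.
move=> hm; have := step_sum v (fun _ => 1); rewrite /=.
under eq_bigr do rewrite mulr1; move=> ->.
case: m v hm => [|m] v hm; first by under eq_bigr do rewrite mulr1.
have hk : (1 <= m.+1 < N)%N by rewrite hm.
by have [_ -> _] := Kker hk (wn_le v m).
Qed.

Lemma marg m M G : (m <= M)%N -> (M <= N)%N -> cyl m G ->
  \sum_(w : {ffun 'I_M -> T}) Pm w * G (wn w) = \sum_(v : {ffun 'I_m -> T}) Pm v * G (wn v).
Proof.
elim: M => [|M IH] hmM hMN hG.
  by move: hmM; rewrite leqn0 => /eqP ->.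
case: (ltngtP m M.+1) => h; last by rewrite h.
  2: by move: hmM; rewrite leqNgt h.
rewrite ltnS in h; rewrite -IH ?(ltnW hMN) // sum_ext; apply: eq_bigr => v _.
have eG : forall k, G (wn (ext v k)) = G (wn v).
  by move=> k; apply: hG => i hi; rewrite wn_ext ifT //; exact: leq_trans hi h.
under eq_bigr => k _ do rewrite Pm_ext eG.
rewrite -[RHS]mulr1 -(step_one v hMN) mulr_sumr; apply: eq_bigr => k _; ring.
Qed.


Lemma one_step n G (h : nat -> R) : (n < N)%N -> cyl n G ->
  \sum_(w : {ffun 'I_N -> T}) Pm w * (G (wn w) * h (wn w n)) =
  \sum_(v : {ffun 'I_n -> T}) Pm v * (G (wn v) *
     (if n is n'.+1 then Kh J (K n) h (wn v n') else \sum_(k < J.+1) mu 1%N k * h k)).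
Proof.
move=> hn hG.
rewrite (marg (m := n.+1) (G := fun f => G f * h (f n))) //.
  rewrite sum_ext; apply: eq_bigr => v _.
  have eG : forall k, G (wn (ext v k)) = G (wn v).
    by move=> k; apply: hG => i hi; rewrite wn_ext hi.
  have eh : forall k : T, wn (ext v k) n = k by move=> k; rewrite wn_ext ltnn eqxx.
  under eq_bigr => k _ do rewrite Pm_ext eG eh.
  rewrite -(step_sum v h) !mulr_sumr; apply: eq_bigr => k _; ring.
move=> f g hfg; rewrite (hG f g) ?hfg // => i hi; apply: hfg; exact: ltnW.
Qed.

Lemma one_step_S n G (h : nat -> R) : (n.+1 < N)%N -> cyl n.+1 G ->
  \sum_(w : {ffun 'I_N -> T}) Pm w * (G (wn w) * h (wn w n.+1)) =
  \sum_(w : {ffun 'I_N -> T}) Pm w * (G (wn w) * Kh J (K n.+1) h (wn w n)).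
Proof.
move=> hn hG; rewrite one_step //.
rewrite (marg (m := n.+1) (M := N) (G := fun f => G f * Kh J (K n.+1) h (f n))) //.
  exact: ltnW.
by move=> f g hfg; rewrite (hG f g) ?hfg.
Qed.

Lemma Eh n (h : nat -> R) : (n < N)%N ->
  \sum_(w : {ffun 'I_N -> T}) Pm w * h (wn w n) = \sum_(k < J.+1) mu n.+1 k * h k.
Proof.
elim: n h => [|n IH] h hn.
  transitivity (\sum_(w : {ffun 'I_N -> T}) Pm w * ((fun _ => 1) (wn w) * h (wn w 0%N))).
    by apply: eq_bigr => w _; rewrite mul1r.
  rewrite (@one_step 0%N (fun _ => 1) h hn) //.
  by rewrite sum_ffun0 /Pm big_ord0 !mul1r.
transitivity (\sum_(w : {ffun 'I_N -> T}) Pm w * ((fun _ => 1) (wn w) * h (wn w n.+1))).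
  by apply: eq_bigr => w _; rewrite mul1r.
rewrite (@one_step_S n (fun _ => 1) h hn) //.
under eq_bigr do rewrite mul1r.
rewrite IH; last exact: ltnW.
rewrite -app_sum; apply: eq_bigr => k _; rewrite happ //; exact: ordJ.
Qed.

Lemma Pm_ge0 (w : {ffun 'I_N -> T}) : 0 <= Pm w.
Proof.
apply: prodr_ge0 => -[i hi] _ /=; case: i hi => [|i] hi /=.
  exact: mu1_ge0 (wn_le _ _).
by have [K0 _ _] := Kker (n := i.+1) (hi : (1 <= i.+1 < N)%N) (wn_le w i); apply: K0; exact: wn_le.
Qed.

Lemma Pm_sum : \sum_(w : {ffun 'I_N -> T}) Pm w = 1.
Proof.
transitivity (\sum_(w : {ffun 'I_N -> T}) Pm w * (fun _ => 1) (wn w)).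
  by apply: eq_bigr => w _; rewrite mulr1.
rewrite (@marg 0%N N (fun _ => 1)) //.
by rewrite sum_ffun0 /Pm big_ord0 mulr1.
Qed.

End Paths.

Arguments Xt : simpl never.

Section Marg.
Variables (R : realFieldType) (N J : nat) (s0 : R) (x : nat -> R) (c : nat -> nat -> R).
Hypothesis hJ : (1 <= J)%N.
Hypothesis x0 : x 0%N = 0.
Hypothesis xinc : forall j, (j < J)%N -> x j < x j.+1.
Hypothesis hC1 : C1 N J s0 c.
Hypothesis hC2 : C2 N J x c.
Hypothesis hC3 : C3 N J c.
Hypothesis hC4 : C4 N J c.

Definition mu (n k : nat) : R := pj J s0 x c k n.

Lemma cJ_le n m : (1 <= n)%N -> (n <= m)%N -> (m <= N)%N -> c J n <= c J m.
Proof.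
move=> hn; elim: m => [|m IH]; first by rewrite leqn0 => /eqP h; move: hn; rewrite h.
rewrite leq_eqVlt => /orP[/eqP <- _|hnm hm]; first exact: lexx.
apply: le_trans (IH hnm (ltnW hm)) _; apply: hC3 => //.
by rewrite hm (leq_trans hn hnm).
Qed.

Lemma cJ0 n : (1 <= n <= N)%N -> c J n = 0.
Proof.
case/andP=> h1 h2; apply/eqP; rewrite eq_le; apply/andP; split.
  by rewrite -hC4; apply: cJ_le.
by have [_ _ ->] := hC1 (n := n) (introT andP (conj h1 h2)).
Qed.

Lemma slope1 n : (1 <= n <= N)%N -> slope x c 1 n = (s0 - c 1%N n) / x 1%N.
Proof. by move=> hn; have [e _ _] := hC1 hn; rewrite /slope /= e x0 subr0. Qed.

Lemma tail_mu n k : (1 <= n <= N)%N -> (1 <= k <= J)%N -> tail J (mu n) k = slope x c k n.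
Proof.
move=> hn /andP[hk1 hkJ].
have: (k + (J - k) = J)%N by rewrite subnKC.
move: (J - k)%N hk1 => d; clear hkJ; elim: d k => [|d IH] k hk1 e.
  rewrite addn0 in e; rewrite tail_S ?e // tail_end addr0 /mu /pj.
  by rewrite ifF ?ltnn //; apply/negbTE; rewrite -lt0n -e.
have hkJ' : (k < J)%N by rewrite -e addnS ltnS leq_addr.
rewrite tail_S ?(ltnW hkJ') // IH //; last by rewrite addSnnS.
rewrite /mu /pj ifF ?hkJ'; last by apply/negbTE; rewrite -lt0n.
by rewrite subrK.
Qed.

Lemma mu_mass n : (1 <= n <= N)%N -> mass J (mu n) = 1.
Proof.
move=> hn; rewrite -tail_0 tail_S // (@tail_mu n 1%N hn); last by rewrite hJ.
rewrite slope1 //.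
by rewrite /mu /pj eqxx subrK.
Qed.

Lemma Cl_mu n k : (1 <= n <= N)%N -> (k <= J)%N -> Cl J x (mu n) k = c k n.
Proof.
move=> hn hk.
have: (k + (J - k) = J)%N by rewrite subnKC.
move: (J - k)%N => d; elim: d k {hk} => [|d IH] k e.
  by rewrite addn0 in e; rewrite e Cl_J // cJ0.
have hk : (k < J)%N by rewrite -e addnS ltnS leq_addr.
have hk' : (0 < k.+1 <= J)%N by [].
have := Cl_diff xinc (mu n) hk'; rewrite /= (IH k.+1); last by rewrite addSnnS.
rewrite tail_mu //.
rewrite /slope /= => h.
have hx : x k.+1 - x k != 0 by rewrite subr_eq0 gt_eqF // xinc.
have : Cl J x (mu n) k = c k.+1 n + (x k.+1 - x k) * ((c k n - c k.+1 n) / (x k.+1 - x k)).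
  by rewrite -h; ring.
by move=> ->; rewrite mulrC divfK //; ring.
Qed.

Lemma mu_mean n : (1 <= n <= N)%N -> mean J x (mu n) = s0.
Proof.
move=> hn; have := Cl_0 xinc (mu n); rewrite x0 mul0r subr0 => <-.
by rewrite Cl_mu //; have [-> _ _] := hC1 hn.
Qed.

Lemma mu_ge0 n k : (1 <= n <= N)%N -> (k <= J)%N -> 0 <= mu n k.
Proof.
move=> hn hk; have [e hdec _] := hC1 hn; have [h1 h2] := hC2 hn.
rewrite /mu /pj; case: eqP => [_|k0].
  by rewrite subr_ge0 -e.
case: ifP => hkJ.
  rewrite subr_ge0; apply: h2; rewrite hkJ andbT lt0n; exact/eqP.
have hJk : k = J by apply/eqP; rewrite eqn_leq hk leqNgt hkJ.
have eJ : J.-1.+1 = J := prednK hJ.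
have hlt : (J.-1 < J)%N by rewrite -{2}eJ.
rewrite /slope; apply: divr_ge0.
  by have := hdec J.-1 hlt; rewrite eJ subr_ge0.
by have := xinc hlt; rewrite eJ subr_ge0 => /ltW.
Qed.


Hypothesis hN : (1 <= N)%N.

Lemma x_inj a b : (a <= J)%N -> (b <= J)%N -> (x a == x b) = (a == b).
Proof.
move=> ha hb; case: (ltngtP a b) => h.
- by rewrite lt_eqF // (xlt xinc h hb).
- by rewrite gt_eqF // (xlt xinc h ha).
- by rewrite h eqxx.
Qed.

Lemma kernels : exists Kf : nat -> nat -> nat -> R, forall n, (1 <= n < N)%N ->
  kernel J x (Kf n) /\ forall k, (k <= J)%N -> app J (mu n) (Kf n) k = mu n.+1 k.
Proof.
suff: forall m, exists Kf : nat -> nat -> nat -> R, forall n, (n < m)%N -> (1 <= n < N)%N ->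
   kernel J x (Kf n) /\ forall k, (k <= J)%N -> app J (mu n) (Kf n) k = mu n.+1 k.
  by move=> /(_ N) [Kf hK]; exists Kf => n hn; apply: hK => //; case/andP: hn.
elim=> [|m [Kf hK]]; first by exists (fun _ => dlt R).
case: (boolP ((1 <= m < N)%N)) => hm.
  have hm1 : (1 <= m <= N)%N by case/andP: hm => -> /ltnW.
  have hm2 : (1 <= m.+1 <= N)%N by case/andP: hm.
  have hle : forall k, (k <= J)%N -> Cl J x (mu m) k <= Cl J x (mu m.+1) k.
    by move=> k hk; rewrite (Cl_mu hm1 hk) (Cl_mu hm2 hk); apply: hC3.
  have [K0 [hK0 hK0']] := coupling xinc (fun k hk => mu_ge0 hm1 hk) (fun k hk => mu_ge0 hm2 hk)
     (etrans (mu_mass hm1) (esym (mu_mass hm2))) (etrans (mu_mean hm1) (esym (mu_mean hm2))) hle.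
  exists (fun n => if n == m then K0 else Kf n) => n hn hn'.
  case: eqP => [->|nm]; first by split.
  apply: hK => //; rewrite ltn_neqAle; apply/andP; split; [exact/eqP | by rewrite -ltnS].
exists Kf => n hn hn'; apply: hK => //; rewrite ltn_neqAle -ltnS hn andbT.
by apply/eqP => e; move: hm; rewrite -e hn'.
Qed.


Variable Kf : nat -> nat -> nat -> R.
Hypothesis hKf : forall n, (1 <= n < N)%N ->
  kernel J x (Kf n) /\ forall k, (k <= J)%N -> app J (mu n) (Kf n) k = mu n.+1 k.

Lemma hN1 : (1 <= 1 <= N)%N. Proof. by rewrite hN. Qed.
Lemma mu1_sum : \sum_(k < J.+1) mu 1%N k = 1.
Proof. exact: mu_mass hN1. Qed.
Lemma Kker n : (0 < n < N)%N -> kernel J x (Kf n).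
Proof. by move=> h; case: (hKf h). Qed.
Lemma happ n k : (0 < n < N)%N -> (k <= J)%N -> app J (mu n) (Kf n) k = mu n.+1 k.
Proof. by move=> h; case: (hKf h) => _; apply. Qed.
Lemma mu1_ge0 k : (k <= J)%N -> 0 <= mu 1%N k.
Proof. exact: mu_ge0 hN1. Qed.

Definition Pf : {ffun Defs.path N J -> R} := [ffun w : Defs.path N J => Pm mu Kf w].

Lemma Xt_S (w : Defs.path N J) n : Xt s0 x w n.+1 = x (wn w n).
Proof. by rewrite /Xt /wn; case: insub => [j|] //=; rewrite x0. Qed.

Lemma prob_sum (A : pred (Defs.path N J)) : prob Pf A = \sum_(w : Defs.path N J) Pm mu Kf w * (A w)%:R.
Proof.
rewrite /prob big_mkcond; apply: eq_bigr => w _; rewrite ffunE.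
by case: (A w); rewrite ?mulr1 ?mulr0.
Qed.

Lemma mart n G : (n < N)%N -> cyl n G ->
  \sum_(w : Defs.path N J) Pm mu Kf w * (G (wn w) * (Xt s0 x w n.+1 - Xt s0 x w n)) = 0.
Proof.
case: n => [|n] hn hG.
  transitivity (\sum_(w : {ffun 'I_N -> 'I_J.+1}) Pm mu Kf w * (G (wn w) * (fun k => x k - s0) (wn w 0%N))).
    by apply: eq_bigr => w _; rewrite Xt_S.
  rewrite (one_step mu1_sum Kker (fun k => x k - s0) hn hG) /=.
  have -> : \sum_(k < J.+1) mu 1%N k * (x k - s0) = 0.
    under eq_bigr do rewrite mulrBr; rewrite sumrB -mulr_suml.
    by have := mu_mean hN1; rewrite /mean => ->; rewrite mu1_sum mul1r subrr.
  by apply: big1 => v _; rewrite !mulr0.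
transitivity (\sum_(w : {ffun 'I_N -> 'I_J.+1}) Pm mu Kf w * (G (wn w) * x (wn w n.+1))
  - \sum_(w : {ffun 'I_N -> 'I_J.+1}) Pm mu Kf w * (G (wn w) * x (wn w n))).
  by rewrite -sumrB; apply: eq_bigr => w _; rewrite !Xt_S; ring.
rewrite (one_step_S mu1_sum Kker x hn hG); apply/eqP; rewrite subr_eq0; apply/eqP.
apply: eq_bigr => w _.
have hn' : (0 < n.+1 < N)%N by rewrite hn.
by have [_ _ ->] := Kker hn' (wn_le w n).
Qed.

Definition Ga n (w0 : Defs.path N J) (f : nat -> nat) : bool :=
  [forall i : 'I_N, ((i : nat) < n)%N ==> (f i == val (w0 i))].

Lemma agree_Ga n (w w0 : Defs.path N J) : agree n w w0 = Ga n w0 (wn w).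
Proof. by apply: eq_forallb => i; rewrite wn_ord. Qed.

Lemma cyl_Ga n w0 : @cyl R n (fun f => (Ga n w0 f)%:R).
Proof.
move=> f g hfg; suff -> : Ga n w0 f = Ga n w0 g by [].
apply: eq_forallb => i /=.
by case: (ltnP i n) => // hi; rewrite hfg.
Qed.

Lemma model : markov_model s0 x c Pf.
Proof.
split.
- by move=> w; rewrite ffunE; apply: Pm_ge0 mu1_ge0 Kker w.
- by under eq_bigr do rewrite ffunE; apply: Pm_sum mu1_sum Kker.
- move=> [|n] j hn hj; first by [].
  rewrite prob_sum.
  transitivity (\sum_(w : {ffun 'I_N -> 'I_J.+1}) Pm mu Kf w * (fun m => (m == j)%:R) (wn w n)).
    by apply: eq_bigr => w _ /=; rewrite Xt_S x_inj // wn_le.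
  have hn' : (n < N)%N by case/andP: hn.
  rewrite (Eh mu1_sum Kker happ (fun m : nat => (m == j)%:R) hn').
  by rewrite -[RHS](sum_dlt2 (mu n.+1) hj).
- move=> n w0 hn.
  rewrite -[RHS](mart hn (@cyl_Ga n w0)) big_mkcond; apply: eq_bigr => w _.
  by rewrite ffunE agree_Ga; case: (Ga n w0 (wn w)); rewrite ?mul1r ?mul0r ?mulr0.
- move=> [|n] w0 k; first by [].
  move=> /andP[_ hn] hk.
  rewrite !prob_sum.
  set i0 := wn w0 n.
  have hi0 : (i0 <= J)%N by apply: wn_le.
  have hnN : (n < N)%N by apply: ltnW.
  have key : forall G, cyl n.+1 G -> (forall f, G f != 0 -> f n = i0) ->
    \sum_(w : {ffun 'I_N -> 'I_J.+1}) Pm mu Kf w * (G (wn w) * (fun m => (m == k)%:R) (wn w n.+1))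
    = Kf n.+1 i0 k * \sum_(w : {ffun 'I_N -> 'I_J.+1}) Pm mu Kf w * G (wn w).
    move=> G hG hGn; rewrite (one_step_S mu1_sum Kker (fun m : nat => (m == k)%:R) hn hG) mulr_sumr.
    apply: eq_bigr => w _.
    have -> : Kh J (Kf n.+1) (fun m => (m == k)%:R) (wn w n) = Kf n.+1 (wn w n) k.
      by rewrite /Kh -[RHS](sum_dlt2 (Kf n.+1 (wn w n)) hk).
    case: (eqVneq (G (wn w)) 0) => [->|hG0]; first by rewrite !mul0r !mulr0.
    by rewrite (hGn _ hG0); ring.
  have hA := key (fun f => (Ga n.+1 w0 f)%:R) (@cyl_Ga n.+1 w0).
  have hB := key (fun f => (f n == i0)%:R).
  transitivity ((Kf n.+1 i0 k * \sum_(w : {ffun 'I_N -> 'I_J.+1}) Pm mu Kf w * (Ga n.+1 w0 (wn w))%:R)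
     * \sum_(w : {ffun 'I_N -> 'I_J.+1}) Pm mu Kf w * (wn w n == i0)%:R).
    congr (_ * _).
      rewrite -hA; last first.
        move=> f; case: (boolP (Ga n.+1 w0 f)) => [hG _|_]; last by rewrite eqxx.
        move/forallP: hG => /(_ (Ordinal hnN)) /=; rewrite ltnSn /= => /eqP ->.
        by rewrite /i0 -(wn_ord w0 (Ordinal hnN)).
      apply: eq_bigr => w _ /=; rewrite agree_Ga Xt_S x_inj ?wn_le //.
      by case: (Ga _ _ _); case: (_ == _); rewrite /= ?mulr1 ?mul1r ?mulr0 ?mul0r.
    apply: eq_bigr => w _ /=; rewrite !Xt_S x_inj ?wn_le //.
  transitivity ((\sum_(w : {ffun 'I_N -> 'I_J.+1}) Pm mu Kf w * (Ga n.+1 w0 (wn w))%:R) *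
     (Kf n.+1 i0 k * \sum_(w : {ffun 'I_N -> 'I_J.+1}) Pm mu Kf w * (wn w n == i0)%:R)).
    ring.
  congr (_ * _).
    by apply: eq_bigr => w _ /=; rewrite agree_Ga.
  rewrite -hB.
  - apply: eq_bigr => w _ /=; rewrite !Xt_S !x_inj ?wn_le //.
    by rewrite /i0; case: (wn w n == wn w0 n); case: (_ == _); rewrite /= ?mulr1 ?mul1r ?mulr0 ?mul0r.
  - by move=> f g hfg; rewrite hfg.
  - by move=> f; case: (eqVneq (f n) i0) => // _ /=; rewrite eqxx.
Qed.

Lemma call_exp j n : (j < J.+1)%N -> (1 <= n < N.+1)%N ->
  \sum_(w : Defs.path N J) Pm mu Kf w * Num.max 0 (Xt s0 x w n - x j) = c j n.
Proof.
move=> hj; case: n => [|n] // /andP[_ hn].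
transitivity (\sum_(w : {ffun 'I_N -> 'I_J.+1}) Pm mu Kf w * (fun m => Num.max 0 (x m - x j)) (wn w n)).
  by apply: eq_bigr => w _; rewrite Xt_S.
rewrite (Eh mu1_sum Kker happ (fun m => Num.max 0 (x m - x j)) hn).
have hn' : (1 <= n.+1 <= N)%N by [].
by rewrite -(Cl_mu hn' hj).
Qed.

Lemma gain0 (delta : nat -> Defs.path N J -> R) n : adapted delta -> (n < N)%N ->
  \sum_(w : Defs.path N J) Pm mu Kf w * (delta n w * (Xt s0 x w n.+1 - Xt s0 x w n)) = 0.
Proof.
move=> hadapt hn.
pose G (f : nat -> nat) := delta n [ffun j : 'I_N => inord (f j) : 'I_J.+1].
have hG : cyl n G.
  move=> f g hfg; rewrite /G; apply: hadapt; apply/forallP => i; apply/implyP => hi.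
  by rewrite !ffunE hfg.
rewrite -[RHS](mart hn hG); apply: eq_bigr => w _; rewrite /G ffun_wn.
done.
Qed.

Lemma no_arb : ~ arbitrage N J s0 x c.
Proof.
move=> [b [a [delta [hadapt hcost hpos]]]].
pose E := \sum_(w : Defs.path N J) Pm mu Kf w * payoff s0 x b a delta w.
have hE : E = cost N J c b a.
  rewrite /E /payoff /cost.
  under eq_bigr do rewrite !mulrDr.
  rewrite !big_split /= -mulr_suml (Pm_sum mu1_sum Kker) mul1r.
  have -> : \sum_(w : Defs.path N J) Pm mu Kf w *
      (\sum_(0 <= n < N) delta n w * (Xt s0 x w n.+1 - Xt s0 x w n)) = 0.
    under eq_bigr do rewrite mulr_sumr.
    rewrite exchange_big /=; apply: big1_seq => n; rewrite mem_index_iota => /andP[_ hn].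
    exact: gain0.
  rewrite addr0; congr (_ + _).
  under eq_bigr do rewrite mulr_sumr.
  rewrite exchange_big /=; apply: eq_big_nat => j hj.
  under eq_bigr do rewrite mulr_sumr.
  rewrite exchange_big /=; apply: eq_big_nat => n hn.
  under eq_bigr do rewrite mulrCA.
  by rewrite -mulr_sumr call_exp.
have hEpos : 0 < E.
  case: (pickP (fun w : Defs.path N J => 0 < Pm mu Kf w)) => [w1 hw1|hnone].
    rewrite /E (bigD1 w1) //=.
    have h1 : 0 < Pm mu Kf w1 * payoff s0 x b a delta w1 by apply: mulr_gt0.
    have h2 : 0 <= \sum_(i | i != w1) Pm mu Kf i * payoff s0 x b a delta i.
      apply: sumr_ge0 => w _; apply: mulr_ge0; [exact: Pm_ge0 mu1_ge0 Kker w | exact: ltW].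
    lra.
  have : \sum_(w : Defs.path N J) Pm mu Kf w = 0.
    apply: big1 => w _; apply/eqP; rewrite eq_le (Pm_ge0 mu1_ge0 Kker w) andbT.
    by have := hnone w; rewrite /= ltNge => /negbFE.
  by rewrite (Pm_sum mu1_sum Kker) => /eqP; rewrite oner_eq0.
move: hcost; rewrite -hE; lra.
Qed.

End Marg.

Theorem mainTheorem2 (R : realFieldType) (N J : nat) (t : nat -> R) (s0 : R)
    (x : nat -> R) (c : nat -> nat -> R) :
  (1 <= N)%N -> (1 <= J)%N ->
  t 0%N = 0 -> (forall n, (n < N)%N -> t n < t n.+1) ->
  0 < s0 -> x 0%N = 0 -> (forall j, (j < J)%N -> x j < x j.+1) ->
  C1 N J s0 c -> C2 N J x c -> C3 N J c -> C4 N J c ->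
  (exists P, @markov_model R N J s0 x c P) /\ ~ arbitrage N J s0 x c.
Proof.
move=> hN hJ _ _ _ x0 xinc hC1 hC2 hC3 hC4.
have [Kf hKf] := kernels hJ x0 xinc hC1 hC2 hC3 hC4.
split.
  by eexists; apply: model; eassumption.
exact: no_arb hKf.
Qed.
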